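(* Let $n\ge1$ and $d\in\mathbf D$. If $\ell(d)\ne\ell(r_n(d))$, then $d=j/2^n$ for some integer $j$. In particular, for every $r\in\mathrm{Rot}$ there are only finitely many $d\in\mathbf D$ with $\ell(d)\ne\ell(r(d))$.
   Context: $\mathbf D=\{a/2^n:n\ge1,0\le a\le2^n-1\}\subset[0,1)\cong\mathbf R/\mathbf Z$. A standard dyadic interval (s.d.i.) is $(a/2^k,(a+1)/2^k)$ with $a,k\in\mathbf N$, $(a+1)/2^k\le1$. $\ell:\mathbf D\to\mathbf R$ is $\ell(d)=-\log_2(d'-d)$ where $(d,d')$ is the largest s.d.i. with left endpoint $d$ (e.g. $\ell(0)=0$, $\ell(1/2)=1$, $\ell(1/4)=\ell(3/4)=2$). $r_n$ is the rotation $x\mapsto x+2^{-n}\pmod 1$ of the torus (an element of Thompson's group $T$), and $\mathrm{Rot}=\bigcup_{n\ge1}\langle r_n\rangle$ is the group of rotations by dyadic angles $k/2^n$. *)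

(* Defs.v *)
From HB Require Import structures.
From mathcomp Require Import all_boot all_order all_algebra.
From mathcomp Require Import boolp.
Set Implicit Arguments. Unset Strict Implicit. Unset Printing Implicit Defensive.
Import Order.TTheory GRing.Theory Num.Theory.
Local Open Scope ring_scope.

(* The torus R/Z is represented by representatives in [0,1); points of the
   torus that we need are rationals. *)

Definition inD (d : rat) : Prop :=
  exists n : nat, (1 <= n)%N /\
    exists a : nat, (a <= 2 ^ n - 1)%N /\ d = a%:R / (2 ^ n)%:R.

(* [sdi_left d k] : there is a standard dyadic interval (a/2^k, (a+1)/2^k),
   a natural, (a+1)/2^k <= 1 (i.e. a < 2^k), whose left endpoint is d. *)
Definition sdi_left (d : rat) (k : nat) : bool :=
  [exists a : 'I_(2 ^ k), d == (nat_of_ord a)%:R / (2 ^ k)%:R].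

(* ell d = -log2 (length of the largest s.d.i. with left endpoint d)
   = the least k such that an s.d.i. of length 2^-k has left endpoint d.
   (Default value 0 if no such interval exists; never used on D.) *)
Definition ell (d : rat) : nat :=
  match pselect (exists k, sdi_left d k) with
  | left h => ex_minn h
  | right _ => 0%N
  end.

Definition dyrot (n : nat) (d : rat) : rat :=
  let x := d + 1 / (2 ^ n)%:R in if x < 1 then x else x - 1.

(* Main.v *)
Require Import Defs.
From HB Require Import structures.
From mathcomp Require Import all_boot all_order all_algebra.
From mathcomp Require Import boolp lra ring.
Import Order.TTheory GRing.Theory Num.Theory.
Local Open Scope ring_scope.

Definition Zint (x : rat) := exists z : int, x = z%:~R.

Lemma ZintD x y : Zint x -> Zint y -> Zint (x + y).
Proof. by move=> [a ->] [b ->]; exists (a + b); rewrite intrD. Qed.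
Lemma ZintN x : Zint x -> Zint (- x).
Proof. by move=> [a ->]; exists (- a); rewrite intrN. Qed.
Lemma ZintM x y : Zint x -> Zint y -> Zint (x * y).
Proof. by move=> [a ->] [b ->]; exists (a * b); rewrite intrM. Qed.
Lemma Zint_nat (m : nat) : Zint m%:R.
Proof. by exists (Posz m). Qed.

Lemma N_gt0 k : 0 < (2 ^ k)%:R :> rat.
Proof. by rewrite ltr0n expn_gt0. Qed.
Lemma N_neq0 k : (2 ^ k)%:R != 0 :> rat.
Proof. by rewrite gt_eqF // N_gt0. Qed.

Lemma sdiP d k : 0 <= d < 1 -> sdi_left d k <-> Zint (d * (2 ^ k)%:R).
Proof.
move=> /andP[d0 d1]; split.
  case/existsP => a /eqP ->; rewrite mulfVK ?N_neq0 //; exact: Zint_nat.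
case => -[m|m] hz.
  have hm : (m < 2 ^ k)%N.
    rewrite -(ltr_nat rat) -[m%:R]/((Posz m)%:~R) -hz.
    by rewrite -{2}[(2 ^ k)%:R]mul1r ltr_pM2r ?N_gt0.
  apply/existsP; exists (Ordinal hm); apply/eqP => /=.
  by rewrite -[m%:R]/((Posz m)%:~R) -hz mulfK ?N_neq0.
exfalso; move: hz; rewrite NegzE intrN => hz.
have : 0 <= d * (2 ^ k)%:R by rewrite mulr_ge0 // ltW // N_gt0.
by rewrite hz oppr_ge0 leNgt ltr0n.
Qed.

Lemma ell_ext d x : (forall k, sdi_left d k = sdi_left x k) -> ell d = ell x.
Proof.
move=> h; rewrite /ell; case: pselect => [p|np]; case: pselect => [q|nq] //.
- exact: eq_ex_minn.
- by exfalso; apply: nq; case: p => k hk; exists k; rewrite -h.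
- by exfalso; apply: np; case: q => k hk; exists k; rewrite h.
Qed.

Lemma dyrot_range n d : 0 <= d < 1 -> 0 <= dyrot n d < 1.
Proof.
move=> /andP[d0 d1]; rewrite /dyrot.
have h1 : 0 < 1 / (2 ^ n)%:R :> rat by rewrite divr_gt0 // N_gt0.
have h2 : 1 / (2 ^ n)%:R <= 1 :> rat.
  by rewrite ler_pdivrMr ?N_gt0 // mul1r ler1n expn_gt0.
case: ifP => h; apply/andP; split; try lra.
Qed.

Lemma pow_split k n : (n <= k)%N -> (2 ^ k)%:R = (2 ^ (k - n))%:R * (2 ^ n)%:R :> rat.
Proof. by move=> h; rewrite -natrM -expnD subnK. Qed.

Lemma dyrot_diff n d k : (n <= k)%N -> Zint (dyrot n d * (2 ^ k)%:R - d * (2 ^ k)%:R).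
Proof.
move=> hk; rewrite /dyrot (pow_split _ _ hk); have hN := N_neq0 n.
set N := (2 ^ n)%:R; set M := (2 ^ (k - n))%:R; case: ifP => _.
  have -> : (d + 1 / N) * (M * N) - d * (M * N) = M by field.
  exact: Zint_nat.
have -> : (d + 1 / N - 1) * (M * N) - d * (M * N) = M + - (M * N) by field.
apply: ZintD; first exact: Zint_nat.
apply: ZintN; apply: ZintM; exact: Zint_nat.
Qed.

Lemma dyrot_sdi n d : 0 <= d < 1 -> ~ Zint (d * (2 ^ n)%:R) ->
  ~ Zint (dyrot n d * (2 ^ n)%:R) /\ forall k, sdi_left d k = sdi_left (dyrot n d) k.
Proof.
move=> hd hn; have hx := dyrot_range n d hd.
have kn : forall k y, (k < n)%N -> Zint (y * (2 ^ k)%:R) -> Zint (y * (2 ^ n)%:R).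
  move=> k y /ltnW hk hy; rewrite (pow_split _ _ hk) mulrCA mulrC; apply: ZintM => //; exact: Zint_nat.
have eqv : forall k, (n <= k)%N -> Zint (d * (2 ^ k)%:R) <-> Zint (dyrot n d * (2 ^ k)%:R).
  move=> k hk; have hD := dyrot_diff n d k hk; split => h.
    have -> : dyrot n d * (2 ^ k)%:R = (dyrot n d * (2 ^ k)%:R - d * (2 ^ k)%:R) + d * (2 ^ k)%:R by ring.
    exact: ZintD.
  have -> : d * (2 ^ k)%:R = dyrot n d * (2 ^ k)%:R + - (dyrot n d * (2 ^ k)%:R - d * (2 ^ k)%:R) by ring.
  by apply: ZintD => //; apply: ZintN.
split; first by move=> h; apply: hn; apply/(eqv n (leqnn n)).
move=> k; apply/idP/idP.
  move/(sdiP _ _ hd) => h; apply/(sdiP _ _ hx).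
  case: (ltnP k n) => hk; first by exfalso; apply: hn; apply: kn h.
  by apply/eqv.
move/(sdiP _ _ hx) => h; apply/(sdiP _ _ hd).
case: (ltnP k n) => hk.
  by exfalso; apply: hn; apply/(eqv n (leqnn n)); apply: kn h.
by apply/eqv.
Qed.

Lemma inD_range d : inD d -> 0 <= d < 1.
Proof.
case=> m [_ [a [ha ->]]]; apply/andP; split.
  by rewrite divr_ge0.
rewrite ltr_pdivrMr ?N_gt0 // mul1r ltr_nat.
by apply: leq_ltn_trans ha _; rewrite ltn_subrL expn_gt0.
Qed.

Theorem proposition3p18 :
  (forall (n : nat) (d : rat), (1 <= n)%N -> inD d ->
     ell d <> ell (dyrot n d) ->
     exists j : int, d = j%:~R / (2 ^ n)%:R)
  /\
  (forall (n m : nat), (1 <= n)%N ->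
     exists s : seq rat, forall d : rat, inD d ->
       ell d <> ell (iter m (dyrot n) d) -> d \in s).
Proof.
split.
  move=> n d _ /inD_range hd hne.
  case: (pselect (Zint (d * (2 ^ n)%:R))) => [[z hz]|hz].
    by exists z; rewrite -hz mulfK ?N_neq0.
  by exfalso; apply: hne; apply: ell_ext; case: (dyrot_sdi _ _ hd hz).
move=> n m _.
exists [seq (j%:R / (2 ^ n)%:R : rat) | j <- iota 0 (2 ^ n)].
move=> d /inD_range hd hne.
case: (pselect (Zint (d * (2 ^ n)%:R))) => [hz|hz].
  move/(sdiP _ _ hd): hz => /existsP[a /eqP ->].
  by apply: map_f; rewrite mem_iota add0n ltn_ord.
exfalso; apply: hne; apply: ell_ext.
suff : forall i, [/\ 0 <= iter i (dyrot n) d < 1, ~ Zint (iter i (dyrot n) d * (2 ^ n)%:R)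
   & forall k, sdi_left d k = sdi_left (iter i (dyrot n) d) k] by case/(_ m).
elim=> [|i [h1 h2 h3]] /=; first by split.
have [h4 h5] := dyrot_sdi _ _ h1 h2.
split => //; first exact: dyrot_range.
by move=> k; rewrite h3 h5.
Qed.
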